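(* For every integer $L\ge 0$, every integer $l\ge 1$ and every integer $n\ge 0$, $$S_L(n+1,l)=\sum_{k=l-1}^{n}\binom{n}{k}\binom{n+1}{k}^{L}S_L(k,l-1),$$ with $S_L(0,0)=1$ and $S_L(n,0)=0$ for $n\ge1$. Consequently all $S_L(n,l)$ are nonnegative integers (positive for $1\le l\le n$).
   Context: For an integer $L\ge 0$ let ${}_0F_L(z)=\sum_{n=0}^{\infty}\frac{z^n}{(n!)^{L+1}}$. Define the numbers $S_L(n,l)$ ($n,l\ge 0$; with $S_L(n,l)=0$ for $l>n$) by the formal power series identities $\frac{({}_0F_L(z)-1)^l}{l!}=\sum_{n\ge l}\frac{S_L(n,l)}{(n!)^{L+1}}z^n$ for each $l\ge 0$; equivalently $\exp\big(x({}_0F_L(z)-1)\big)=\sum_{n\ge0}\Big[\sum_{k=0}^{n}S_L(n,k)x^k\Big]\frac{z^n}{(n!)^{L+1}}$. For $L=0$ these are the Stirling numbers of the second kind. *)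

(* Defs.v *)
From mathcomp Require Import all_boot all_order all_algebra.
Set Implicit Arguments. Unset Strict Implicit. Unset Printing Implicit Defensive.
Import Order.TTheory GRing.Theory Num.Theory.
Local Open Scope ring_scope.

Definition fps := nat -> rat.

Definition fps_mul (a b : fps) : fps :=
  fun n => \sum_(i < n.+1) a i * b (n - i)%N.

Definition fps_one : fps := fun n => if n == 0%N then 1 else 0.

Definition fps_pow (a : fps) (l : nat) : fps := iter l (fps_mul a) fps_one.

Definition F0L (L : nat) : fps := fun n => ((n`!)%:R ^+ L.+1)^-1.

Definition F0L_m1 (L : nat) : fps := fun n => if n == 0%N then 0 else F0L L n.

Definition SL (L n l : nat) : rat :=
  (n`!)%:R ^+ L.+1 * (fps_pow (F0L_m1 L) l n / (l`!)%:R).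

(* Main.v *)
Require Import Defs.
From mathcomp Require Import all_boot all_order all_algebra.
From mathcomp Require Import zify ring lra.
Import Order.TTheory GRing.Theory Num.Theory.
Local Open Scope ring_scope.

Lemma fps_powS a l : fps_pow a l.+1 = fps_mul a (fps_pow a l).
Proof. by []. Qed.

Lemma fps_pow_poly (a : fps) N l n : (n <= N)%N ->
  fps_pow a l n = ((\poly_(i < N.+1) a i) ^+ l)`_n.
Proof.
elim: l n => [|l IH] n hn.
  by rewrite expr0 coef1 /fps_pow /= /fps_one; case: (n == 0%N).
rewrite exprS coefM fps_powS /fps_mul; apply: eq_bigr => i _.
rewrite coef_poly IH; last by lia.
have -> : (i < N.+1)%N by have := ltn_ord i; lia.
by [].
Qed.

Lemma fps_pow_low a : a 0%N = 0 -> forall m k, (k < m)%N -> fps_pow a m k = 0.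
Proof.
move=> a0; elim=> [|m IH] k // hk.
rewrite fps_powS /fps_mul big1 // => [[i hi]] _ /=.
case: i hi => [|i] hi; first by rewrite a0 mul0r.
by rewrite IH ?mulr0 //; lia.
Qed.

Lemma key (a : fps) l n : (1 <= l)%N ->
  fps_pow a l n.+1 *+ n.+1 =
  (\sum_(k < n.+1) fps_pow a l.-1 k * (a (n - k).+1 *+ (n - k).+1)) *+ l.
Proof.
move=> hl.
set p := \poly_(i < n.+2) a i.
rewrite (@fps_pow_poly a n.+1 l n.+1 (leqnn n.+1)) -/p -coef_deriv deriv_exp coefMn mulrC coefM.
congr (_ *+ _); apply: eq_bigr => [[k hk]] _ /=.
rewrite coef_deriv coef_poly -(@fps_pow_poly a n.+1 l.-1 k (leq_trans hk (leqnSn _))).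
by rewrite (_ : ((n - k).+1 < n.+2)%N = true) //; lia.
Qed.
Lemma term_id L n k (P f : rat) : (k <= n)%N -> f != 0 ->
  ((n.+1)`!)%:R ^+ L.+1 / (n.+1)%:R / f * (P * (F0L_m1 L (n - k).+1 *+ (n - k).+1))
  = 'C(n, k)%:R * ('C(n.+1, k)%:R) ^+ L * ((k`!)%:R ^+ L.+1 * (P / f)).
Proof.
move=> hk hf.
have h1 := bin_fact hk.
have h2 := bin_fact (leq_trans hk (leqnSn n)).
rewrite subSn // factS in h2.
rewrite /F0L_m1 /F0L /=.
have -> : ((n - k).+1 `!) = ((n-k).+1 * (n-k)`!)%N by rewrite factS.
rewrite factS in h2 *.
set A := k`! in h1 h2 *. set B := (n-k)`! in h1 h2 *. set C := n`! in h1 h2 *.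
have hA : (A%:R : rat) != 0 by rewrite pnatr_eq0 -lt0n fact_gt0.
have hB : (B%:R : rat) != 0 by rewrite pnatr_eq0 -lt0n fact_gt0.
have hC : (C%:R : rat) != 0 by rewrite pnatr_eq0 -lt0n fact_gt0.
have hC1 : ('C(n, k)%:R : rat) = C%:R / (A%:R * B%:R).
  have := congr1 (fun x => x%:R : rat) h1; rewrite /= !natrM => <-.
  by field; rewrite hA hB.
have hC2 : ('C(n.+1, k)%:R : rat) = (n.+1)%:R * C%:R / (A%:R * ((n-k).+1%:R * B%:R)).
  have := congr1 (fun x => x%:R : rat) h2; rewrite /= !natrM => <-.
  by field; rewrite hA hB andbT; apply: lt0r_neq0; have := ler0n rat (n - k); lra.
rewrite hC1 hC2 !natrM.
have hn : ((n.+1)%:R : rat) != 0 by rewrite pnatr_eq0.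
have hj : (((n-k).+1)%:R : rat) != 0 by rewrite pnatr_eq0.
rewrite -mulr_natr.
rewrite !exprMn !exprVn !exprMn !exprS.
have hj' : 1 + (n - k)%:R != 0 :> rat by apply: lt0r_neq0; have := ler0n rat (n - k); lra.
have hn' : 1 + n%:R != 0 :> rat by apply: lt0r_neq0; have := ler0n rat n; lra.
by field; rewrite hf !expf_neq0 // hA hB hj' hn'.
Qed.

Lemma F0L_m1_0 L : F0L_m1 L 0%N = 0.
Proof. by []. Qed.

Lemma SL_low L n l : (n < l)%N -> SL L n l = 0.
Proof. by move=> h; rewrite /SL fps_pow_low ?mul0r ?mulr0. Qed.

Lemma aux (X S N F M : rat) : N != 0 -> F != 0 -> M != 0 ->
  X * (S * M / N / (M * F)) = X / N / F * S.
Proof. by move=> *; field; apply/and3P. Qed.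

Lemma rec L l n : (1 <= l)%N ->
  SL L n.+1 l =
  \sum_(l.-1 <= k < n.+1) ('C(n, k)%:R * ('C(n.+1, k)%:R) ^+ L * SL L k l.-1).
Proof.
move=> hl.
rewrite big_geq_mkord big_mkcond /=.
under [RHS]eq_bigr => i _.
  rewrite (_ : (if _ then _ else _) = 'C(n, i)%:R * ('C(n.+1, i)%:R) ^+ L * SL L i l.-1); last first.
    by case: ifP => // h; rewrite SL_low ?mulr0 // ltnNge h.
  over.
have hf : ((l.-1)`!)%:R != 0 :> rat by rewrite pnatr_eq0 -lt0n fact_gt0.
have hn : (n.+1)%:R != 0 :> rat by rewrite pnatr_eq0.
have hl0 : (l%:R) != 0 :> rat by rewrite pnatr_eq0 -lt0n.
have hk := @key (F0L_m1 L) l n hl.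
rewrite /SL (_ : l`! = (l * (l.-1)`!)%N); last by case: (l) hl => // l' _; rewrite factS.
set S := \sum_(k < n.+1) _ in hk.
have -> : fps_pow (F0L_m1 L) l n.+1 = S *+ l / (n.+1)%:R.
  by rewrite -hk -[_ *+ n.+1]mulr_natr mulfK.
rewrite (_ : _ * _ = ((n.+1)`!)%:R ^+ L.+1 / (n.+1)%:R / ((l.-1)`!)%:R * S); last first.
  rewrite natrM -[S *+ l]mulr_natr.
  by rewrite aux.
rewrite /S mulr_sumr; apply: eq_bigr => [[k hk']] _ /=.
by rewrite term_id.
Qed.

Lemma SL00 L : SL L 0 0 = 1.
Proof. by rewrite /SL /= expr1n mul1r divr1. Qed.

Lemma SLn0 L n : (1 <= n)%N -> SL L n 0 = 0.
Proof. by case: n => // n _; rewrite /SL /= /fps_one /= mul0r mulr0. Qed.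

Lemma SL_nat L n l : SL L n l \is a Num.nat.
Proof.
elim: l n => [|l IH] n.
  case: n => [|n]; first by rewrite SL00.
  by rewrite SLn0.
case: n => [|n]; first by rewrite SL_low.
rewrite rec //; apply: rpred_sum => k _; apply: rpredM; last exact: IH.
by apply: rpredM; rewrite ?rpredX ?natr_nat.
Qed.

Lemma SL_diag L l : 0 < SL L l l.
Proof.
elim: l => [|l IH]; first by rewrite SL00.
rewrite rec // big_nat1 -pred_Sn; apply: mulr_gt0 => //; apply: mulr_gt0; last apply: exprn_gt0; by rewrite ltr0n bin_gt0.
Qed.

Theorem mainTheorem2 :
  (forall L l n : nat, (1 <= l)%N ->
     SL L n.+1 l =
     \sum_(l.-1 <= k < n.+1) ('C(n, k)%:R * ('C(n.+1, k)%:R) ^+ L * SL L k l.-1))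
  /\ (forall L : nat, SL L 0 0 = 1)
  /\ (forall L n : nat, (1 <= n)%N -> SL L n 0 = 0)
  /\ (forall L n l : nat, exists m : nat, SL L n l = m%:R)
  /\ (forall L n l : nat, (1 <= l <= n)%N -> 0 < SL L n l).
Proof.
split; first exact: rec.
split; first exact: SL00.
split; first exact: SLn0.
split; first by move=> L n l; apply/natrP/SL_nat.
move=> L n l /andP[hl hn].
case: n hn => [|m] hn; first by case: l hl hn.
rewrite rec // big_ltn; last by case: l hl hn.
have h1 : 0 < 'C(m, l.-1)%:R * 'C(m.+1, l.-1)%:R ^+ L * SL L l.-1 l.-1 :> rat.
  apply: mulr_gt0; last exact: SL_diag. apply: mulr_gt0; last apply: exprn_gt0; rewrite ltr0n bin_gt0; case: l hl hn => // l; lia.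
have h2 : 0 <= \sum_(l.-1.+1 <= k < m.+1) ('C(m, k)%:R * 'C(m.+1, k)%:R ^+ L * SL L k l.-1) :> rat.
  apply: sumr_ge0 => k _; apply: natr_ge0.
  apply: rpredM; last exact: SL_nat. by apply: rpredM; rewrite ?rpredX ?natr_nat.
lra.
Qed.
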